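(* Let $G$ be a finite group. Then $U(G)\le K(G)$.
   Context: For $\chi\in\mathrm{Irr}(G)$, the center of $\chi$ is $Z(\chi)=\{g\in G : |\chi(g)|=\chi(1)\}$. For a nonabelian group $G$, let $\mathcal{X}=\{\chi\in\mathrm{Irr}(G) : Z(\chi)>Z(G)\}$ (strict containment) and define $K(G)=\bigcap_{\chi\in\mathcal{X}}\ker(\chi)$; if $G$ is abelian, set $K(G)=G$. For a normal subgroup $H$ of $G$, $\mathrm{Irr}(G\mid H)$ is the set of $\chi\in\mathrm{Irr}(G)$ with $H\not\le\ker(\chi)$, and $V(G\mid H)$ is the subgroup generated by all $g\in G$ with $\chi(g)\ne0$ for some $\chi\in\mathrm{Irr}(G\mid H)$ (with $V(G\mid 1)=1$). For a normal subgroup $N$, $U(G\mid N)$ is the product of all normal subgroups $H$ of $G$ with $V(G\mid H)\le N$, and $U(G)=U(G\mid Z(G))$. *)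

(* Defs.v *)
From HB Require Import structures.
From mathcomp Require Import all_boot all_order all_algebra all_fingroup all_solvable all_field all_character.
Set Implicit Arguments. Unset Strict Implicit. Unset Printing Implicit Defensive.
Import GRing.Theory Num.Theory.
Local Open Scope group_scope.

(* K(G): intersection of kernels of irreducible chi with Z(chi) > Z(G);
   K(G) = G when G is abelian.  'Z(chi)%CF is MathComp's cfcenter, which for
   an irreducible character is [set g in G | `|chi g| == chi 1]. *)
Definition Kgrp (gT : finGroupType) (G : {group gT}) : {set gT} :=
  if abelian G then G
  else G :&: \bigcap_(i : Iirr G | 'Z(G) \proper 'Z(('chi_i)%R)%CF) cfker ('chi_i)%R.

Definition Vgrp (gT : finGroupType) (G H : {group gT}) : {set gT} :=
  <<[set g in G | [exists i : Iirr G,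
        ~~ (H \subset cfker ('chi_i)%R) && ('chi_i g != 0)%R]]>>.

Definition Ugrp_rel (gT : finGroupType) (G : {group gT}) (N : {set gT})
  : {set gT} :=
  <<\bigcup_(H : {group gT} | (H <| G) && (Vgrp G H \subset N)) H>>.

Definition Ugrp (gT : finGroupType) (G : {group gT}) : {set gT} :=
  Ugrp_rel G 'Z(G).

(* Main.v *)
Require Import Defs.
From mathcomp Require Import all_boot all_order all_algebra all_fingroup all_solvable all_field all_character.
Import GRing.Theory Num.Theory.
Local Open Scope group_scope.

Lemma key (gT : finGroupType) (G H : {group gT}) (i : Iirr G) :
  Vgrp G H \subset 'Z(G) -> 'Z(G) \proper 'Z(('chi_i)%R)%CF ->
  H \subset cfker ('chi_i)%R.
Proof.
move=> sVZ pZ; apply/negPn/negP => nH.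
have: 'Z(('chi_i)%R)%CF \subset 'Z(G).
  apply/subsetP => g Zg.
  have Gg : g \in G := subsetP (cfcenter_sub _) g Zg.
  apply: (subsetP sVZ).
  rewrite /Vgrp; apply: (subsetP (subset_gen _)).
  rewrite inE Gg; apply/existsP; exists i; rewrite nH /=.
  move: Zg; rewrite irr_cfcenterE // => /eqP Eg.
  apply/eqP => c0; move: Eg; rewrite c0 normr0 => E0.
  by move: (irr1_gt0 i); rewrite -E0 Order.POrderTheory.ltxx.
by move=> sZ; move: pZ; rewrite properE sZ andbF.
Qed.

Theorem lemma6p5 (gT : finGroupType) (G : {group gT}) :
  Ugrp G \subset Kgrp G.
Proof.
rewrite /Ugrp /Ugrp_rel /Kgrp.
case: ifP => _.
  rewrite gen_subG; apply/bigcupsP => H /andP [/andP [sHG _] _] //.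
rewrite subsetI; apply/andP; split.
  rewrite gen_subG; apply/bigcupsP => H /andP [/andP [sHG _] _] //.
rewrite gen_subG; apply/bigcupsP => H /andP [_ sV].
apply/bigcapsP => i pZ; exact: key.
Qed.
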